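(* For every integer $n\ge 1$, the hexagonal stacked prism $Y_{6,n}$ is odd prime.
   Context: All graphs are finite and simple. A graph $G$ of order $N$ is odd prime if there is a bijection $\ell:V(G)\to\{1,3,\ldots,2N-1\}$ with $\gcd(\ell(u),\ell(v))=1$ for every edge $uv$. For $k\ge 3$, $n\ge 1$, the stacked prism $Y_{k,n}$ is the Cartesian product $C_k\,\square\,P_n$ of a $k$-cycle and a path on $n$ vertices: vertices $v_{i,j}$ ($1\le i\le n$, $1\le j\le k$), with edges $v_{i,j}v_{i,j+1}$ ($1\le j\le k-1$), $v_{i,k}v_{i,1}$ for each $i$, and $v_{i,j}v_{i+1,j}$ for $1\le i\le n-1$, $1\le j\le k$. *)

(* Defs.v *)
From mathcomp Require Import all_boot.
Set Implicit Arguments. Unset Strict Implicit. Unset Printing Implicit Defensive.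

Definition odd_prime (T : finType) (adj : rel T) : Prop :=
  exists l : T -> nat,
    [/\ injective l,
        (forall v, odd (l v) /\ l v < 2 * #|T|),
        (forall m, odd m -> m < 2 * #|T| -> exists v, l v = m)
      & (forall u v, adj u v -> coprime (l u) (l v))].

(* Stacked prism Y_{k,n} = C_k □ P_n.  Vertex v_{i,j} (1<=i<=n, 1<=j<=k)
   is encoded as the pair (i-1, j-1) : 'I_n * 'I_k. *)
Definition prism_vertex (k n : nat) := ('I_n * 'I_k)%type.

Definition prism_adj (k n : nat) : rel (prism_vertex k n) :=
  fun x y =>
    let: (i, j) := x in let: (i', j') := y in
    ((i == i' :> nat) && ((j'.+1 %% k == j) || (j.+1 %% k == j')))
    || ((j == j' :> nat) && ((i.+1 == i') || (i'.+1 == i))).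

Lemma prism_adj_sym k n : symmetric (@prism_adj k n).
Proof.
move=> [i j] [i' j'] /=.
have -> : (i == i' :> nat) = (i' == i :> nat) by apply: eq_sym.
have -> : (j == j' :> nat) = (j' == j :> nat) by apply: eq_sym.
by rewrite (orbC (j'.+1 %% k == j)) (orbC (i.+1 == i')).
Qed.

Lemma prism_adj_irrefl k n : 3 <= k -> irreflexive (@prism_adj k n).
Proof.
move=> hk [i j] /=; rewrite !eqxx /= !orbb.
have hj : j < k := ltn_ord j.
apply/negbTE/negP => /orP [] /eqP.
  case: (ltngtP j.+1 k) => h.
  - by rewrite modn_small // => /esym /n_Sn.
  - by move: h; rewrite ltnS leqNgt hj.
  - by rewrite h modnn => h0; move: hk; rewrite -h -h0.
by move=> /esym /n_Sn.
Qed.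

(* Main.v *)
Require Import Defs.
From mathcomp Require Import all_boot.
From mathcomp Require Import zify.

Definition rtab : seq (seq nat) :=
  [:: [:: 1; 3; 7; 11; 9; 5]; [:: 5; 7; 11; 3; 1; 9]; [:: 9; 11; 3; 7; 5; 1]].
Definition r (t j : nat) : nat := nth 0 (nth [::] rtab t) j.

Definition pow2diff (a b : nat) : bool :=
  has (fun k => (a + 2 ^ k == b) || (b + 2 ^ k == a)) (iota 0 5).

Lemma pd_shift c a b : pow2diff (c + a) (c + b) = pow2diff a b.
Proof. by rewrite /pow2diff; apply: eq_has => k /=; rewrite -!addnA !eqn_add2l. Qed.

Lemma cop_add x k : odd x -> coprime x (x + 2 ^ k).
Proof.
move=> ox; rewrite /coprime gcdnDl.
by apply: coprimeXr; rewrite coprimen2.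
Qed.

Lemma pd_coprime x y : odd x -> odd y -> pow2diff x y -> coprime x y.
Proof.
move=> ox oy /hasP [k _ /orP [] /eqP <-]; first exact: cop_add.
by rewrite coprime_sym; apply: cop_add.
Qed.

Definition lab n (v : prism_vertex 6 n) : nat :=
  let: (i, j) := v in 12 * i + r (i %% 3) j.
Arguments lab {n}.

Definition all3 (P : nat -> nat -> bool) := all (fun t => all (P t) (iota 0 6)) (iota 0 3).
Lemma all3P P t j : all3 P -> t < 3 -> j < 6 -> P t j.
Proof.
move=> /allP /(_ t) h ht hj.
have /h /allP /(_ j) : t \in iota 0 3 by rewrite mem_iota.
by apply; rewrite mem_iota.
Qed.

Lemma r_odd t j : t < 3 -> j < 6 -> odd (r t j) && (r t j < 12).
Proof. by apply: (all3P (fun t j => odd (r t j) && (r t j < 12))); vm_compute. Qed.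

Lemma r_inj t j j' : t < 3 -> j < 6 -> j' < 6 -> r t j = r t j' -> j = j'.
Proof.
move=> ht hj hj' e.
have := all3P (fun t j => all (fun j' => (r t j == r t j') ==> (j == j')) (iota 0 6)) t j _ ht hj.
move=> /(_ ltac:(vm_compute; reflexivity)) /allP /(_ j').
by rewrite mem_iota e eqxx /= => /(_ hj') /eqP.
Qed.

Lemma r_surj t s : t < 3 -> s < 12 -> odd s -> exists2 j, j < 6 & r t j = s.
Proof.
move=> ht hs os.
have : all (fun t => all (fun s => odd s ==> has (fun j => r t j == s) (iota 0 6)) (iota 0 12)) (iota 0 3).
  by vm_compute.
move=> /allP /(_ t); rewrite mem_iota ht => /(_ isT) /allP /(_ s).
rewrite mem_iota hs os => /(_ isT) /hasP [j]; rewrite mem_iota => /andP [_ hj] /eqP e.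
by exists j.
Qed.

Lemma r_horiz t j : t < 3 -> j < 6 -> pow2diff (r t j) (r t (j.+1 %% 6)).
Proof. by apply: (all3P (fun t j => pow2diff (r t j) (r t (j.+1 %% 6)))); vm_compute. Qed.

Lemma r_vert t j : t < 3 -> j < 6 -> pow2diff (r t j) (12 + r (t.+1 %% 3) j).
Proof. by apply: (all3P (fun t j => pow2diff (r t j) (12 + r (t.+1 %% 3) j))); vm_compute. Qed.

Lemma pd_sym a b : pow2diff a b = pow2diff b a.
Proof. by rewrite /pow2diff; apply: eq_has => k /=; rewrite orbC. Qed.

Lemma lab_odd n (v : prism_vertex 6 n) : odd (lab v) && (lab v < 12 * n).
Proof.
case: v => i j; rewrite /lab /=.
have /andP [o b] := r_odd _ _ (ltn_mod i 3 : i %% 3 < 3) (ltn_ord j).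
have hi := ltn_ord i.
rewrite oddD oddM /= o /=; lia.
Qed.

Lemma adj_pd n (u v : prism_vertex 6 n) : prism_adj u v -> pow2diff (lab u) (lab v).
Proof.
case: u v => i j [i' j']; rewrite /prism_adj /lab /=.
move=> /orP [/andP [/eqP ei h] | /andP [/eqP ej h]].
- rewrite ei pd_shift; move: h => /orP [] /eqP <-.
  + by rewrite pd_sym; apply: r_horiz; [exact: ltn_mod | exact: ltn_ord].
  + by apply: r_horiz; [exact: ltn_mod | exact: ltn_ord].
- rewrite ej; move: h => /orP [] /eqP <-.
  + rewrite mulnSr -(addnA (12 * i) 12) pd_shift -(addn1 i) -modnDml addn1.
    by apply: r_vert; [exact: ltn_mod | exact: ltn_ord].
  + rewrite pd_sym mulnSr -(addnA (12 * i') 12) pd_shift -(addn1 i') -modnDml addn1.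
    by apply: r_vert; [exact: ltn_mod | exact: ltn_ord].
Qed.

Theorem theorem3p8 (n : nat) : 1 <= n -> odd_prime (@prism_adj 6 n).
Proof.
move=> hn; exists (@lab n).
rewrite card_prod !card_ord; split.
- move=> [i j] [i' j']; rewrite /lab /= => e.
  have /andP [_ b] := r_odd _ _ (ltn_mod i 3 : i %% 3 < 3) (ltn_ord j).
  have /andP [_ b'] := r_odd _ _ (ltn_mod i' 3 : i' %% 3 < 3) (ltn_ord j').
  have eii : i = i' :> nat by lia.
  have ei : i = i' by apply: val_inj.
  subst i'.
  have : r (i %% 3) j = r (i %% 3) j' by lia.
  move/(r_inj _ _ _ (ltn_mod i 3) (ltn_ord j) (ltn_ord j')) => ejj.
  by rewrite (val_inj ejj).
- move=> v; have /andP [o b] := lab_odd _ v; split => //; lia.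
- move=> m om hm.
  have hi : m %/ 12 < n by rewrite ltn_divLR //; lia.
  have hs : m %% 12 < 12 by rewrite ltn_mod.
  have os : odd (m %% 12).
    by move: om; rewrite {1}(divn_eq m 12) oddD oddM [odd 12]/= andbF.
  have [j hj ej] := r_surj _ _ (ltn_mod (m %/ 12) 3 : (m %/ 12) %% 3 < 3) hs os.
  exists (Ordinal hi, Ordinal hj); rewrite /lab /= ej.
  by rewrite {3}(divn_eq m 12) mulnC.
- move=> u v h; apply: pd_coprime; first by have /andP [] := lab_odd _ u.
    by have /andP [] := lab_odd _ v.
  exact: adj_pd.
Qed.
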